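(* Let $\sigma$ and $\sigma'$ be two triangulations of the polygon $P$. For any two edges $(P_i,P_{i'})$ and $(P_j,P_{j'})$ belonging to both $\sigma$ and $\sigma'$, the minimal $\theta$-length of paths from $(P_i,P_{i'})$ to $(P_j,P_{j'})$ in $Q_\sigma$ equals the minimal $\theta$-length of such paths in $Q_{\sigma'}$.
   Context: $P$ is a regular polygon with vertices $P_1,\dots,P_n$ ($n\ge3$) counterclockwise; a triangulation is a maximal set of non-crossing diagonals; its edges are the sides of $P$ and its diagonals, $(P_a,P_b)$ being the edge joining $P_a,P_b$. $Q_\sigma$ has vertices the edges of $\sigma$; an internal arrow $a\to b$ whenever $a,b$ are sides of a common triangle of $\sigma$ and $a$ precedes $b$ anticlockwise around their common vertex; an external arrow $a\to b$ between the two sides of $P$ at each polygon vertex incident to a diagonal of $\sigma$, $a$ preceding $b$ anticlockwise. The $\theta$-length of an internal arrow $a\to b$ is $t$ if the angle between $a$ and $b$ in their triangle is $t\pi/n$; an external arrow has $\theta$-length $2$; $\theta$-length is additive on paths. *)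

(* Defs.v *)
From mathcomp Require Import all_boot.
Set Implicit Arguments. Unset Strict Implicit. Unset Printing Implicit Defensive.

Section Polygon.
Variable n : nat.

(* Vertices P_1..P_n are 'I_n, numbered counterclockwise.
   cdist i j = number of counterclockwise steps from P_i to P_j. *)
Definition cdist (i j : 'I_n) : nat := (j + n - i) %% n.

Definition btw (a x b : 'I_n) : Prop := 0 < cdist a x < cdist a b.

(* An edge (P_a,P_b) is the 2-element set {a,b}. *)
Definition is_side (e : {set 'I_n}) : Prop :=
  exists i j : 'I_n, e = [set i; j] /\ cdist i j = 1.

Definition is_diag (e : {set 'I_n}) : Prop :=
  exists i j : 'I_n, [/\ e = [set i; j], i != j, cdist i j != 1 & cdist j i != 1].

(* two diagonals cross iff their endpoints interleave cyclically *)
Definition cross (d1 d2 : {set 'I_n}) : Prop :=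
  exists a b c d : 'I_n,
    [/\ d1 = [set a; b], d2 = [set c; d], btw a c b & btw b d a].

Definition triangulation (s : {set {set 'I_n}}) : Prop :=
  [/\ (forall d, d \in s -> is_diag d),
      (forall d1 d2, d1 \in s -> d2 \in s -> ~ cross d1 d2) &
      (forall d, is_diag d -> (forall d', d' \in s -> ~ cross d d') -> d \in s)].

Definition edge_of (s : {set {set 'I_n}}) (e : {set 'I_n}) : Prop :=
  is_side e \/ e \in s.

Definition ccw_triangle (s : {set {set 'I_n}}) (x y z : 'I_n) : Prop :=
  [/\ btw x y z, edge_of s [set x; y], edge_of s [set y; z] & edge_of s [set x; z]].

(* Internal: in the triangle x,y,z (ccw), around x the side xy precedes xz
   anticlockwise; the angle at x is (cdist y z) * pi / n. *)
Definition arrow (s : {set {set 'I_n}}) (a b : {set 'I_n}) (t : nat) : Prop :=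
  (exists x y z : 'I_n,
     [/\ ccw_triangle s x y z, a = [set x; y], b = [set x; z] & t = cdist y z])
  \/
  (exists u v w : 'I_n,
     [/\ (exists d, d \in s /\ v \in d), cdist u v = 1 /\ cdist v w = 1,
         a = [set u; v], b = [set v; w] & t = 2]).

Inductive qpath (s : {set {set 'I_n}}) : {set 'I_n} -> {set 'I_n} -> nat -> Prop :=
  | qpath_nil a : qpath s a a 0
  | qpath_cons a b c t L : arrow s a b t -> qpath s b c L -> qpath s a c (t + L).

Definition min_theta (s : {set {set 'I_n}}) (a b : {set 'I_n}) (m : nat) : Prop :=
  qpath s a b m /\ (forall L, qpath s a b L -> m <= L).

End Polygon.

(* Main.v *)
Require Import Defs.
From mathcomp Require Import all_boot zify.
From Stdlib Require Import Classical.
Set Implicit Arguments. Unset Strict Implicit. Unset Printing Implicit Defensive.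


Lemma cdL n (i j : 'I_n) : (i <= j -> cdist i j = j - i) /\ (j < i -> cdist i j = j + n - i).
Proof.
have hi := ltn_ord i; have hj := ltn_ord j.
rewrite /cdist; split=> h.
  have ->: j + n - i = (j - i) + n by lia.
  by rewrite modnDr modn_small //; lia.
by rewrite modn_small //; lia.
Qed.

Lemma cdL1 n (i j : 'I_n) : i <= j -> cdist i j = j - i.
Proof. exact: (proj1 (cdL i j)). Qed.
Lemma cdL2 n (i j : 'I_n) : j < i -> cdist i j = j + n - i.
Proof. exact: (proj2 (cdL i j)). Qed.

Ltac cdl := unfold btw;
  repeat (match goal with |- context[@cdist ?n ?i ?j] =>
     have := ltn_ord i; have := ltn_ord j;
     let h := fresh "h" in
     case: (leqP i j) => h; [rewrite (cdL1 h) | rewrite (cdL2 h)]; move: h;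
     try (intros; exfalso; lia) end);
  intros; lia.

Lemma tri n (x y z : 'I_n) : cdist x z <= cdist x y + cdist y z.
Proof. cdl. Qed.

Lemma cd_xx n (x : 'I_n) : cdist x x = 0.
Proof. cdl. Qed.


Lemma set2_inv (T : finType) (a b c d : T) :
  [set a; b] = [set c; d] -> (a = c /\ b = d) \/ (a = d /\ b = c).
Proof.
move=> E.
have ha : a \in [set c; d] by rewrite -E !inE eqxx.
have hb : b \in [set c; d] by rewrite -E !inE eqxx orbT.
have hc : c \in [set a; b] by rewrite E !inE eqxx.
have hd : d \in [set a; b] by rewrite E !inE eqxx orbT.
move: ha hb hc hd; rewrite !inE => /orP[]/eqP ha /orP[]/eqP hb /orP[]/eqP hc /orP[]/eqP hd; subst; intuition congruence.
Qed.

Lemma set2C' (T : finType) (a b : T) : [set a; b] = [set b; a].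
Proof. by apply/setP=> x; rewrite !inE orbC. Qed.

Definition Fm n (a b c d : 'I_n) := minn (cdist a c + cdist b d) (cdist a d + cdist b c).

Lemma qpath_cat n (s : {set {set 'I_n}}) a b c L1 L2 :
  qpath s a b L1 -> qpath s b c L2 -> qpath s a c (L1 + L2).
Proof.
elim=> [//|a' b' c' t L Ha _ IH] H2.
rewrite -addnA; exact: qpath_cons Ha (IH H2).
Qed.

Lemma LB n (s : {set {set 'I_n}}) e f L : qpath s e f L ->
  forall a b c d, e = [set a; b] -> f = [set c; d] -> Fm a b c d <= L.
Proof.
elim=> [e0|e0 e1 e2 t L0 Har _ IH] a b c d Ee Ef.
  rewrite Ee in Ef; case: (set2_inv Ef) => -[-> ->]; rewrite /Fm !cd_xx; lia.
case: Har => [[x [y [z [_ E0 E1 ->]]]]|[u [v [w [_ [h1 h2] E0 E1 ->]]]]].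
- have := IH x z c d E1 Ef; rewrite Ee in E0.
  have := tri y z c; have := tri y z d.
  case: (set2_inv E0) => -[-> ->]; rewrite /Fm; lia.
- have := IH w v c d (etrans E1 (set2C' _ _)) Ef; rewrite Ee in E0.
  have := tri u w c; have := tri u w d; have := tri u v w.
  case: (set2_inv E0) => -[-> ->]; rewrite /Fm; lia.
Qed.


Lemma cd_inj n (a u v : 'I_n) : cdist a u = cdist a v -> u = v.
Proof. move=> h; apply/val_inj => /=; move: h; cdl. Qed.

Lemma cd_inj2 n (a u v : 'I_n) : cdist u a = cdist v a -> u = v.
Proof. move=> h; apply/val_inj => /=; move: h; cdl. Qed.

Lemma succ_ex n (x : 'I_n) : 1 < n -> exists w : 'I_n, cdist x w = 1.
Proof.
move=> hn; have hx := ltn_ord x.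
case: (ltnP x.+1 n) => h.
  by exists (Ordinal h); have := cdL x (Ordinal h); rewrite /=; lia.
have h0 : 0 < n by lia.
by exists (Ordinal h0); have := cdL x (Ordinal h0); rewrite /=; lia.
Qed.

Lemma pred_ex n (x : 'I_n) : 1 < n -> exists w : 'I_n, cdist w x = 1.
Proof.
move=> hn; have hx := ltn_ord x.
case: (posnP x) => h.
  have h0 : n.-1 < n by lia.
  by exists (Ordinal h0); have := cdL (Ordinal h0) x; rewrite /=; lia.
have h0 : x.-1 < n by lia.
by exists (Ordinal h0); have := cdL (Ordinal h0) x; rewrite /=; lia.
Qed.

Lemma NC n (s : {set {set 'I_n}}) e f : triangulation s -> edge_of s e -> edge_of s f -> ~ cross e f.
Proof.
move=> [Hd Hnc Hmax] He Hf Hc; move: (Hc) => [a [b [c [d [Ea Ef Hb1 Hb2]]]]].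
case: He => [[i [j [Ei Hij]]]|He].
  rewrite Ea in Ei; case: (set2_inv Ei)=> -[??]; subst; move: Hij Hb1 Hb2; cdl.
case: Hf => [[i [j [Ei Hij]]]|Hf].
  rewrite Ef in Ei; case: (set2_inv Ei)=> -[??]; subst; move: Hij Hb1 Hb2; cdl.
exact: (Hnc _ _ He Hf).
Qed.

Lemma TE n (s : {set {set 'I_n}}) (x y : 'I_n) : triangulation s -> edge_of s [set x; y] ->
  2 <= cdist y x -> exists w, btw y w x /\ ccw_triangle s x y w.
Proof.
move=> Ht Hxy Hyx.
have hn : 1 < n by move: Hyx; cdl.
have [w0 Hw0] := pred_ex x hn.
suff: forall k w, cdist y w = k -> 0 < k < cdist y x -> edge_of s [set x; w] ->
  exists w, btw y w x /\ ccw_triangle s x y w.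
  move=> H; apply: (H (cdist y w0) w0 erefl).
    by move: Hw0 Hyx; cdl.
  by left; exists w0, x; rewrite set2C'.
elim/ltn_ind => k IH w Hk Hrange Hxw.
case: (classic (exists w', 0 < cdist y w' < k /\ edge_of s [set x; w'])) => [[w' [h1 h2]]|Hmin].
  apply: (IH (cdist y w')) => //; first by case/andP: h1.
  by move: h1 Hrange; lia.
exists w.
have Hyw : edge_of s [set y; w].
  case: (ltnP 1 k) => hk; last first.
    by left; exists y, w; split => //; lia.
  right; case: (Ht) => Hd Hnc Hmax; apply: Hmax.
    exists y, w; split => //.
    - apply/eqP=> E; subst; rewrite cd_xx in hk; lia.
    - apply/eqP; lia.
    - apply/eqP => E; move: E Hk Hrange hk; cdl.
  move=> d' Hd' [a [b [c [d [E1 E2 Hb1 Hb2]]]]].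
  have [c0 [d0 [Ed' [Hc0 Hd0]]]] : exists c0 d0, d' = [set c0; d0] /\ btw y c0 w /\ btw w d0 y.
    case: (set2_inv E1) => -[??]; subst.
      by exists c, d.
    by exists d, c; rewrite set2C'.
  case: (ltngtP (cdist y d0) (cdist y x)) => hd.
  - apply: (NC Ht (e:=[set w; x]) (f:=d')); [by rewrite set2C' | by right |].
    exists w, x, d0, c0; split => //; first by rewrite Ed' set2C'.
      by move: hd Hc0 Hd0 Hk Hrange; cdl.
    by move: hd Hc0 Hd0 Hk Hrange; cdl.
  - apply: (NC Ht (e:=[set x; y]) (f:=d')); [by [] | by right |].
    exists x, y, d0, c0; split => //; first by rewrite Ed' set2C'.
      by move: hd Hc0 Hd0 Hk Hrange; cdl.
    by move: hd Hc0 Hd0 Hk Hrange; cdl.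
  - have ? := cd_inj hd; subst d0.
    apply: Hmin; exists c0; split.
      by move: Hc0 Hk; cdl.
    by right; rewrite set2C' -Ed'.
split; first by move: Hk Hrange; cdl.
split => //; by move: Hk Hrange; cdl.
Qed.


Lemma ND n (s : {set {set 'I_n}}) (x y w : 'I_n) : 3 <= n -> triangulation s ->
  cdist y x = 1 -> cdist x w = 1 -> ~ (exists d, d \in s /\ x \in d) -> ccw_triangle s y x w.
Proof.
move=> hn Ht hyx hxw Hnd.
have [w' [Hb [Hb' Hyx' Hxw' Hyw']]] : exists w', btw x w' y /\ ccw_triangle s y x w'.
  apply: TE => //; first by left; exists y, x.
  by move: hn hyx; cdl.
have ew : w' = w.
  case: Hxw' => [[i [j [E h]]]|Hin].
    case: (set2_inv E) => -[e1 e2].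
      rewrite -e1 -e2 in h; apply: (cd_inj (a:=x)); by rewrite h hxw.
    rewrite -e1 -e2 in h; have e := cd_inj2 (etrans h (esym hyx)).
    by rewrite e in Hb; move: Hb; rewrite /btw; lia.
  by exfalso; apply: Hnd; exists [set x; w']; split => //; rewrite !inE eqxx.
by subst w'; split.
Qed.

Lemma tri_rot n (s : {set {set 'I_n}}) (x y z : 'I_n) :
  ccw_triangle s x y z -> ccw_triangle s y z x.
Proof.
case=> hb h1 h2 h3; split => //; first by move: hb; cdl.
  by rewrite set2C'.
by rewrite set2C'.
Qed.

Lemma Rot n (s : {set {set 'I_n}}) (x : 'I_n) : 3 <= n -> triangulation s ->
  forall k (y z : 'I_n), cdist y z = k ->
  edge_of s [set x; y] -> edge_of s [set x; z] -> y <> x -> z <> x ->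
  qpath s [set x; y] [set x; z] k.
Proof.
move=> hn Ht; elim/ltn_ind => k IH y z Hk Hy Hz hyx hzx.
have [eyz|hyz] := eqVneq y z.
  by subst z; rewrite cd_xx in Hk; subst k; constructor.
have hpos : 0 < cdist y z.
  rewrite lt0n; apply/eqP => e; move/eqP: hyz; apply; apply: (cd_inj (a:=y)); by rewrite e cd_xx.
case: (leqP 2 (cdist y x)) => h2.
  have [w [Hb Htr]] := TE Ht Hy h2.
  have Hnot : ~ btw y z w.
    move=> Hbz; apply: (NC Ht (e:=[set y; w]) (f:=[set z; x])).
    - by case: Htr.
    - by rewrite set2C'.
    exists y, w, z, x; split => //; by move: Hb; cdl.
  have hw : w <> x by move=> e; rewrite e in Hb; move: Hb; rewrite /btw; lia.
  have hle : cdist y w <= cdist y z.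
    rewrite leqNgt; apply/negP => hlt; apply: Hnot; rewrite /btw hpos hlt //.
  have Hsplit : cdist y z = cdist y w + cdist w z by move: hle Hb; cdl.
  rewrite -Hk Hsplit; apply: qpath_cons.
    by left; exists x, y, w; split.
  apply: IH => //.
    by move: Hb; rewrite -Hk Hsplit /btw; lia.
  by case: Htr.
have hyx1 : cdist y x = 1.
  suff : cdist y x != 0 by lia.
  apply/eqP => e; apply: hyx; apply: (cd_inj (a:=y)); by rewrite e cd_xx.
have [w hw] := succ_ex x (ltn_trans (isT : 1 < 2) hn).
have hzx' : 0 < cdist x z.
  rewrite lt0n; apply/eqP => e; apply: hzx; apply: (cd_inj (a:=x)); by rewrite e cd_xx.
have hsplit : cdist y z = 2 + cdist w z by move: hn hyx1 hw hzx' hpos; cdl.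
have Hw : edge_of s [set x; w] by left; exists x, w.
have hwx : w <> x by move=> e; rewrite e cd_xx in hw.
have IH' := IH (cdist w z) ltac:(lia) w z erefl Hw Hz hwx hzx.
case: (classic (exists d, d \in s /\ x \in d)) => Hd.
  rewrite -Hk hsplit; apply: qpath_cons IH'.
  by right; exists y, x, w; split => //; rewrite set2C'.
have Htr := ND hn Ht hyx1 hw Hd.
have Htr2 := tri_rot (tri_rot Htr).
rewrite -Hk hsplit.
have -> : 2 + cdist w z = 1 + (1 + cdist w z) by lia.
rewrite (set2C' x y); apply: (qpath_cons (b:=[set y; w])).
  by left; exists y, x, w; split.
rewrite (set2C' y w); apply: (qpath_cons (b:=[set w; x])).
  by left; exists w, y, x; split.
by rewrite (set2C' w x).
Qed.


Lemma edge_neq n (s : {set {set 'I_n}}) (a b : 'I_n) : triangulation s ->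
  edge_of s [set a; b] -> a <> b.
Proof.
move=> [Hd _ _] H e; subst b.
have key : forall i j : 'I_n, [set a; a] = [set i; j] -> i = j.
  by move=> i j E; case: (set2_inv E) => -[<- <-].
case: H => [[i [j [E h]]]|Hin].
  by rewrite (key _ _ E) cd_xx in h.
have [i [j [E hij _ _]]] := Hd _ Hin.
by rewrite (key _ _ E) eqxx in hij.
Qed.

Lemma cd_pos n (a b : 'I_n) : a <> b -> 0 < cdist a b.
Proof.
move=> h; rewrite lt0n; apply/eqP => e; apply: h; apply: (cd_inj (a:=a)); by rewrite e cd_xx.
Qed.

Lemma cdA n (a x y : 'I_n) : cdist a x <= cdist a y -> cdist x y = cdist a y - cdist a x.
Proof. cdl. Qed.

Lemma cdS n (a b w : 'I_n) : 3 <= n -> cdist a b = 1 -> cdist b w = 1 -> cdist a w = 2.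
Proof. cdl. Qed.

Lemma UB n (s : {set {set 'I_n}}) : 3 <= n -> triangulation s ->
  forall k (a b c d : 'I_n), Fm a b c d = k -> edge_of s [set a; b] -> edge_of s [set c; d] ->
  qpath s [set a; b] [set c; d] k.
Proof.
move=> hn Ht; elim/ltn_ind => k IH.
have core : forall a b c d : 'I_n, Fm a b c d = k -> edge_of s [set a; b] -> edge_of s [set c; d] ->
    0 < cdist a b -> cdist a b < cdist a c -> cdist a b < cdist a d ->
    qpath s [set a; b] [set c; d] k.
  move=> a b c d Hk He Hf h0 hbc hbd.
  case: (leqP 2 (cdist a b)) => h2.
    have He' : edge_of s [set b; a] by rewrite set2C'.
    have [u [Hb Htr]] := TE Ht He' h2.
    have Hval : Fm b u c d + cdist a u = k.
      move: Hb; rewrite /btw => /andP[hu1 hu2].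
      rewrite -Hk /Fm (cdA (a:=a) (x:=b) (y:=c)) ?(cdA (a:=a) (x:=u) (y:=d))
        ?(cdA (a:=a) (x:=b) (y:=d)) ?(cdA (a:=a) (x:=u) (y:=c)); lia.
    rewrite (set2C' a b) -Hval addnC; apply: qpath_cons.
      by left; exists b, a, u; split.
    apply: IH => //.
      by move: Hb; rewrite -Hval /btw; lia.
    by case: Htr.
  have h1 : cdist a b = 1 by lia.
  have [w hw] := succ_ex b (ltn_trans (isT : 1 < 2) hn).
  case: (classic (exists dd, dd \in s /\ b \in dd)) => Hd.
    have Hval : Fm b w c d + 2 = k.
      have h2w := cdS hn h1 hw.
      rewrite -Hk /Fm (cdA (a:=a) (x:=b) (y:=c)) ?(cdA (a:=a) (x:=w) (y:=d))
        ?(cdA (a:=a) (x:=b) (y:=d)) ?(cdA (a:=a) (x:=w) (y:=c)); lia.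
    rewrite -Hval addnC; apply: qpath_cons.
      by right; exists a, b, w; split.
    apply: IH => //; first by lia.
    by left; exists b, w.
  have Htr := ND hn Ht h1 hw Hd.
  have Hval : Fm a w c d + 1 = k.
    have h2w := cdS hn h1 hw.
    rewrite -Hk /Fm (cdA (a:=a) (x:=b) (y:=c)) ?(cdA (a:=a) (x:=w) (y:=d))
      ?(cdA (a:=a) (x:=b) (y:=d)) ?(cdA (a:=a) (x:=w) (y:=c)); lia.
  rewrite -Hval addnC; apply: qpath_cons.
    by left; exists a, b, w; split => //; rewrite hw.
  apply: IH => //; first by lia.
  by case: Htr.
move=> a b c d Hk He Hf.
have hab := edge_neq Ht He; have hcd := edge_neq Ht Hf.
have [eac|hac] := eqVneq a c.
  move: Hk Hf hcd; rewrite -eac => Hk Hf hcd; apply: Rot => //;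
  first [congruence | by rewrite set2C' | (by rewrite -Hk /Fm cd_xx; have := tri b a d; lia)].
have [ead|had] := eqVneq a d.
  move: Hk Hf hcd; rewrite -ead => Hk Hf hcd; rewrite (set2C' c a); apply: Rot => //;
  first [congruence | by rewrite set2C' | (by rewrite -Hk /Fm cd_xx; have := tri b a c; lia)].
have [ebc|hbc] := eqVneq b c.
  move: Hk Hf hcd; rewrite -ebc => Hk Hf hcd; rewrite (set2C' a b); apply: Rot => //;
  first [congruence | by rewrite set2C' | (by rewrite -Hk /Fm cd_xx; have := tri a b d; lia)].
have [ebd|hbd] := eqVneq b d.
  move: Hk Hf hcd; rewrite -ebd => Hk Hf hcd; rewrite (set2C' a b) (set2C' c b); apply: Rot => //;
  first [congruence | by rewrite set2C' | (by rewrite -Hk /Fm cd_xx; have := tri a b c; lia)].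
have pb := cd_pos hab.
have pc := cd_pos (elimN eqP hac).
have pd := cd_pos (elimN eqP had).
have nbc : cdist a b != cdist a c by apply/eqP => e; move/eqP: hbc; apply; exact: cd_inj e.
have nbd : cdist a b != cdist a d by apply/eqP => e; move/eqP: hbd; apply; exact: cd_inj e.
case: (ltngtP (cdist a b) (cdist a c)) => h1; last by rewrite h1 eqxx in nbc.
  case: (ltngtP (cdist a b) (cdist a d)) => h2; last by rewrite h2 eqxx in nbd.
  - exact: core.
  - exfalso; apply: (NC Ht He Hf); exists a, b, d, c; split => //; first by rewrite set2C'.
      by move: pb pc pd h1 h2; cdl.
    by move: pb pc pd h1 h2; cdl.
case: (ltngtP (cdist a b) (cdist a d)) => h2; last by rewrite h2 eqxx in nbd.
- exfalso; apply: (NC Ht He Hf); exists a, b, c, d; split => //.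
    by move: pb pc pd h1 h2; cdl.
  by move: pb pc pd h1 h2; cdl.
- rewrite (set2C' a b); apply: core.
  + by rewrite -Hk /Fm; lia.
  + by rewrite set2C'.
  + by [].
  + by move: pb; cdl.
  + by move: pb pc pd h1 h2; cdl.
  + by move: pb pc pd h1 h2; cdl.
Qed.

Theorem proposition2p21 (n : nat) (Hn : 3 <= n)
    (s s' : {set {set 'I_n}}) (i i' j j' : 'I_n) :
  triangulation s -> triangulation s' ->
  edge_of s [set i; i'] -> edge_of s' [set i; i'] ->
  edge_of s [set j; j'] -> edge_of s' [set j; j'] ->
  forall m : nat,
    min_theta s [set i; i'] [set j; j'] m <-> min_theta s' [set i; i'] [set j; j'] m.
Proof.
have key : forall t : {set {set 'I_n}}, triangulation t -> edge_of t [set i; i'] ->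
    edge_of t [set j; j'] -> forall m, min_theta t [set i; i'] [set j; j'] m <-> m = Fm i i' j j'.
  move=> t Ht He Hf m; split.
    case=> Hp Hmin; apply/eqP; rewrite eqn_leq; apply/andP; split.
      exact: Hmin _ ((UB Hn Ht (k:=Fm i i' j j') (a:=i) (b:=i') (c:=j) (d:=j') erefl He Hf)).
    exact: (LB Hp (a:=i) (b:=i') (c:=j) (d:=j') erefl erefl).
  move=> ->; split; first exact: (UB Hn Ht (k:=Fm i i' j j') (a:=i) (b:=i') (c:=j) (d:=j') erefl He Hf).
  by move=> L HL; exact: (LB HL (a:=i) (b:=i') (c:=j) (d:=j') erefl erefl).
move=> Hs Hs' Hi Hi' Hj Hj' m.
by rewrite (key s Hs Hi Hj m) (key s' Hs' Hi' Hj' m).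
Qed.
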